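(* Let $m,K$ be positive integers and $b_1,\dots,b_{3m}$ positive integers with $K/4<b_i<K/2$ and $\sum_i b_i=mK$. Set $W=100(5m)^2K$, $a_i=b_i+W$, $L=3W+K$, $\epsilon=1/(400(5m)^2)$, $h=\lfloor 4\epsilon L\rfloor$, $H=L+h$, $\beta_0=h/H$, $\beta_i=a_i/H-1/3$ ($1\le i\le 3m$). Let $X$ be the multiset consisting of $a_1,\dots,a_{3m}$, $m$ copies of $-H$ and $m$ copies of $h$, and let $T_{\min}$ be a minimum-cost addition tree over $X$. (1) If $z$ is a node of $T_{\min}$ with $z>0$, then $z$ is of the form $\lambda H$, $(1/3+\lambda)H$, or $(2/3+\lambda)H$. (2) If $z$ is an internal node of $T_{\min}$ with $z<0$, then $z$ is of the form $\lambda H$, $(-1/3+\lambda)H$, or $(-2/3+\lambda)H$.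
   Context: An addition tree over a multiset $X$ is a full binary tree whose leaves are labeled by the elements of $X$ (each used once), each internal node having value equal to the sum of its children's values; its cost is the sum of the absolute values of its internal nodes, and $T_{\min}$ minimizes the cost. Nodes are identified with their values. A ''$\lambda$'' denotes a sum of at most $5m$ numbers each of the form $\pm\beta_i$ with $0\le i\le 3m$ (different occurrences of $\lambda$ may denote different such sums). Every node value can be written as $(N/3+\lambda)H$ with $N$ an integer; since $|\lambda|\le 1/(500m)$, $N$ and the value of $\lambda$ are uniquely determined. *)

(* Defs.v *)
From HB Require Import structures.
From mathcomp Require Import all_boot all_order all_algebra.
Set Implicit Arguments. Unset Strict Implicit. Unset Printing Implicit Defensive.
Import Order.TTheory GRing.Theory Num.Theory.
Local Open Scope ring_scope.

Inductive atree := ALeaf of int | ANode of atree & atree.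

Fixpoint leaves (t : atree) : seq int :=
  match t with ALeaf x => [:: x] | ANode l r => leaves l ++ leaves r end.

Fixpoint tval (t : atree) : int :=
  match t with ALeaf x => x | ANode l r => tval l + tval r end.

Fixpoint internal_vals (t : atree) : seq int :=
  match t with ALeaf _ => [::]
  | ANode l r => tval t :: (internal_vals l ++ internal_vals r) end.

Fixpoint all_vals (t : atree) : seq int :=
  match t with ALeaf x => [:: x]
  | ANode l r => tval t :: (all_vals l ++ all_vals r) end.

Definition cost (t : atree) : int := \sum_(v <- internal_vals t) `|v|.

Definition is_addition_tree (X : seq int) (t : atree) : Prop :=
  perm_eq (leaves t) X.

Definition is_min_tree (X : seq int) (t : atree) : Prop :=
  is_addition_tree X t /\
  forall t', is_addition_tree X t' -> cost t <= cost t'.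

(* Parameters of the construction, given m, K, b (b indexed 1..3m). *)
Section Construction.
Variables (m K : nat) (b : nat -> int).

Definition Wp : int := (100 * (5 * m) ^ 2 * K)%N%:Z.
Definition ap (i : nat) : int := b i + Wp.
Definition Lp : int := 3 * Wp + K%:Z.
Definition epsp : rat := (400 * (5 * m) ^ 2)%N%:R^-1.
Definition hp : int := Num.floor (4 * epsp * Lp%:~R).
Definition Hp : int := Lp + hp.
Definition betap (i : nat) : rat :=
  if i == 0%N then hp%:~R / Hp%:~R else (ap i)%:~R / Hp%:~R - 3^-1.

Definition Xp : seq int :=
  [seq ap i | i <- iota 1 (3 * m)] ++ nseq m (- Hp) ++ nseq m hp.

(* z = (N/3 + lambda) H, lambda a sum of at most 5m terms +-beta_i, 0<=i<=3m *)
Definition lambda_form (N : int) (z : int) : Prop :=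
  exists s : seq (bool * nat),
    [/\ (size s <= 5 * m)%N,
        all (fun p => (p.2 <= 3 * m)%N) s &
        z%:~R = (N%:~R / 3 + \sum_(p <- s) (if p.1 then betap p.2 else - betap p.2))
                * Hp%:~R :> rat].
End Construction.

(* Main.v *)
From Pilot Require Import Defs.
From HB Require Import structures.
From mathcomp Require Import all_boot all_order all_algebra.
From mathcomp Require Import zify ring.
Import Pilot.Defs.
Import Order.TTheory GRing.Theory Num.Theory.
Local Open Scope ring_scope.

Fixpoint tmap (f : int -> int) (t : atree) : atree :=
  match t with ALeaf x => ALeaf (f x) | ANode l r => ANode (tmap f l) (tmap f r) end.
Fixpoint subtrees (t : atree) : seq atree :=
  t :: match t with ALeaf _ => [::] | ANode l r => subtrees l ++ subtrees r end.
Definition isnode (t : atree) : bool := if t is ANode _ _ then true else false.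

Lemma tval_sum t : tval t = \sum_(x <- leaves t) x.
Proof.
elim: t => [x|l IHl r IHr] /=; first by rewrite big_seq1.
by rewrite big_cat /= IHl IHr.
Qed.

Lemma leaves_tmap f t : leaves (tmap f t) = map f (leaves t).
Proof. by elim: t => [x|l IHl r IHr] //=; rewrite map_cat IHl IHr. Qed.

Lemma tval_tmap f t : tval (tmap f t) = \sum_(x <- leaves t) f x.
Proof. by rewrite tval_sum leaves_tmap big_map. Qed.

Lemma cost_leaf x : cost (ALeaf x) = 0.
Proof. by rewrite /cost big_nil. Qed.

Lemma cost_node l r : cost (ANode l r) = `|tval l + tval r| + cost l + cost r.
Proof. by rewrite /cost /= big_cons big_cat /= addrA. Qed.

Lemma size_internal t : (size (internal_vals t)).+1 = size (leaves t).
Proof.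
elim: t => [x|l IHl r IHr] //=.
by rewrite !size_cat -IHl -IHr addnS.
Qed.

Definition psi (n : int) : int :=
  if n == 0 then 0 else if 0 < n then 2 - n else if (n %% 3)%Z == 0 then 0 else -1.

Lemma psiS (a b : int) :
  ((3 <= `|a+b|) : nat)%:R <= `|a+b| + psi (a+b) - psi a - psi b.
Proof. rewrite /psi. repeat case: ifP => ?; lia. Qed.

Definition nbad (t : atree) : nat := count (fun v : int => 3 <= `|v|) (internal_vals t).

Lemma comb_ineq (cl cr nl nr P pl pr A Cl Cr d : int) :
  cl - pl + nl <= Cl -> cr - pr + nr <= Cr -> d <= A + P - pl - pr ->
  cl + cr - P + (d + nl + nr) <= A + Cl + Cr.
Proof. lia. Qed.

Lemma lowerA u : all (fun x : int => (x == 1) || (x == -3) || (x == 0)) (leaves u) ->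
  (count (eq_op^~ 1) (leaves u))%:R - psi (tval u) + (nbad u)%:R <= cost u.
Proof.
elim: u => [x|l IHl r IHr] /=.
  rewrite andbT cost_leaf /nbad /= /psi.
  by case/orP => [/orP[]|] /eqP ->.
rewrite all_cat => /andP[/IHl Hl /IHr Hr].
have E : (nbad (ANode l r))%:R = ((3 <= `|tval l + tval r|) : nat)%:R + (nbad l)%:R + (nbad r)%:R :> int.
  by rewrite /nbad /= count_cat !natrD addrA.
have C : (count (eq_op^~ 1) (leaves l ++ leaves r))%:R =
   (count (eq_op^~ 1) (leaves l))%:R + (count (eq_op^~ 1) (leaves r))%:R :> int.
  by rewrite count_cat natrD.
rewrite E C cost_node.
exact: comb_ineq Hl Hr (psiS (tval l) (tval r)).
Qed.

Lemma sum_le_const (T : eqType) (s : seq T) (f : T -> int) c :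
  (forall x, x \in s -> f x <= c) -> \sum_(x <- s) f x <= (size s)%:R * c.
Proof.
elim: s => [|y s IH] H; first by rewrite big_nil mul0r.
rewrite big_cons /= -addn1 natrD mulrDl mul1r [X in _ <= X]addrC lerD //.
  by apply: H; rewrite inE eqxx.
by apply: IH => x Hx; apply: H; rewrite inE Hx orbT.
Qed.

Lemma add3 (x y z X Y Z : int) : x <= X -> y <= Y -> z <= Z -> x + y + z <= Y + Z + X.
Proof. lia. Qed.

Lemma approxB (nu : int -> int) (H B : int) t : 0 <= H ->
  \sum_(x <- leaves t) `|3 * x - nu x * H| <= B ->
  `|3 * cost t - H * cost (tmap nu t)| <= (size (internal_vals t))%:R * B.
Proof.
move=> H0; elim: t => [x|l IHl r IHr] /=.
  by rewrite !cost_leaf !mulr0 subrr normr0 mul0r.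
rewrite big_cat /= => HB.
have B0 : 0 <= B.
  apply: le_trans HB; apply: addr_ge0; apply: sumr_ge0 => i _; exact: normr_ge0.
have Hl' : \sum_(x <- leaves l) `|3 * x - nu x * H| <= B.
  apply: le_trans HB; rewrite lerDl; apply: sumr_ge0 => i _; exact: normr_ge0.
have Hr' : \sum_(x <- leaves r) `|3 * x - nu x * H| <= B.
  apply: le_trans HB; rewrite lerDr; apply: sumr_ge0 => i _; exact: normr_ge0.
move: (IHl Hl') (IHr Hr') => {IHl IHr Hl' Hr'} El Er.
rewrite !cost_node /= size_cat.
have key : `| 3 * `|tval l + tval r| - H * `|tval (tmap nu l) + tval (tmap nu r)| | <= B.
  have -> : 3 * `|tval l + tval r| = `|3 * (tval l + tval r)|.
    by rewrite normrM.
  have -> : H * `|tval (tmap nu l) + tval (tmap nu r)| = `|H * (tval (tmap nu l) + tval (tmap nu r))|.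
    by rewrite normrM (ger0_norm H0).
  apply: le_trans (ler_dist_dist _ _) _.
  have -> : 3 * (tval l + tval r) - H * (tval (tmap nu l) + tval (tmap nu r)) =
            \sum_(x <- leaves l ++ leaves r) (3 * x - nu x * H).
    rewrite !tval_tmap !tval_sum -!big_cat /= mulr_sumr mulr_sumr -sumrB.
    by apply: eq_bigr => i _; rewrite [H * _]mulrC.
  apply: le_trans (ler_norm_sum _ _ _) _.
  by rewrite big_cat.
set n1 := size (internal_vals l) in El *; set n2 := size (internal_vals r) in Er *.
rewrite -addn1 !natrD.
set A := `|tval l + tval r| in key *.
set A' := `|tval (tmap nu l) + tval (tmap nu r)| in key *.
have e : 3 * (A + cost l + cost r) - H * (A' + cost (tmap nu l) + cost (tmap nu r)) =
  (3 * A - H * A') + (3 * cost l - H * cost (tmap nu l)) + (3 * cost r - H * cost (tmap nu r)).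
  by ring.
rewrite e.
apply: le_trans (ler_normD _ _) _.
apply: le_trans (lerD (ler_normD _ _) (lexx _)) _.
have -> : ((n1 + n2).+1%:R : int) * B = n1%:R * B + n2%:R * B + B.
  by rewrite -addn1 !natrD !mulrDl mul1r.
exact: add3 key El Er.
Qed.
Fixpoint sub (u t : atree) : Prop :=
  u = t \/ match t with ALeaf _ => False | ANode l r => sub u l \/ sub u r end.

Lemma sub_refl t : sub t t.
Proof. by case: t => *; left. Qed.

Lemma all_vals_sub t z : z \in all_vals t -> exists2 u, sub u t & tval u = z.
Proof.
elim: t => [x|l IHl r IHr] /=.
  by rewrite inE => /eqP ->; exists (ALeaf x) => //; left.
rewrite inE mem_cat => /orP[/eqP ->|/orP[/IHl|/IHr]].
- by exists (ANode l r) => //; left.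
- by case=> u Hu <-; exists u => //; right; left.
- by case=> u Hu <-; exists u => //; right; right.
Qed.

Lemma internal_vals_sub t z : z \in internal_vals t ->
  exists u, [/\ sub u t, isnode u & tval u = z].
Proof.
elim: t => [x|l IHl r IHr] //=.
rewrite inE mem_cat => /orP[/eqP ->|/orP[/IHl|/IHr]].
- by exists (ANode l r); split => //; left.
- by case=> u [Hu Hn <-]; exists u; split => //; right; left.
- by case=> u [Hu Hn <-]; exists u; split => //; right; right.
Qed.

Lemma sub_internal f u t : sub u t -> isnode u ->
  tval (tmap f u) \in internal_vals (tmap f t).
Proof.
elim: t => [x|l IHl r IHr] /=.
  by case => // ->.
case=> [->|[/IHl H|/IHr H]] Hn /=.
- by rewrite inE eqxx.
- by rewrite inE mem_cat H ?orbT.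
- by rewrite inE mem_cat H ?orbT.
Qed.

Lemma sub_count (P : pred int) u t : sub u t -> (count P (leaves u) <= count P (leaves t))%N.
Proof.
elim: t => [x|l IHl r IHr] /=.
  by case => // ->.
case=> [->//|[/IHl H|/IHr H]] /=; rewrite count_cat.
- exact: leq_trans H (leq_addr _ _).
- exact: leq_trans H (leq_addl _ _).
Qed.

Lemma sub_leaves u t : sub u t -> {subset leaves u <= leaves t}.
Proof.
elim: t => [x|l IHl r IHr] /=.
  by case => // ->.
case=> [->//|[/IHl H|/IHr H]] y Hy /=; rewrite mem_cat ?H ?orbT //.
Qed.

Lemma sub_sumle (f : int -> int) u t : (forall x, 0 <= f x) -> sub u t ->
  \sum_(x <- leaves u) f x <= \sum_(x <- leaves t) f x.
Proof.
move=> f0; elim: t => [x|l IHl r IHr] /=.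
  by case => // ->.
case=> [->//|[/IHl H|/IHr H]] /=; rewrite big_cat /=.
- apply: le_trans H _; rewrite lerDl; exact: sumr_ge0.
- apply: le_trans H _; rewrite lerDr; exact: sumr_ge0.
Qed.
Lemma intr_nat (n : nat) : (n%:Z)%:~R = n%:R :> rat.
Proof. by rewrite -pmulrn. Qed.

Lemma h_bounds m K : (0 < m)%N -> 0 <= hp m K /\ hp m K <= (4 * K)%N%:Z.
Proof.
move=> m0.
set c := (400 * (5 * m) ^ 2)%N.
have c0 : (0 < c)%N by rewrite /c muln_gt0 expn_gt0 muln_gt0 m0.
have e0 : 0 <= epsp m :> rat by rewrite /epsp invr_ge0 ler0n.
have ec : epsp m * c%:R = 1 :> rat by rewrite /epsp mulVf // pnatr_eq0 -lt0n.
have L0 : 0 <= Lp m K by rewrite /Lp /Wp; lia.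
have LcK : Lp m K <= (c * K)%N%:Z by rewrite /Lp /Wp /c; nia.
split.
  rewrite /hp floor_ge0; apply: mulr_ge0; first by apply: mulr_ge0.
  by rewrite ler0z.
rewrite -(ler_int rat); apply: le_trans (floor_le _) _.
apply: (@le_trans _ _ (4 * epsp m * ((c * K)%N%:Z)%:~R)).
  by apply: ler_wpM2l; [apply: mulr_ge0 | rewrite ler_int].
rewrite !intr_nat natrM mulrA -(mulrA 4) ec mulr1 natrM.
by [].
Qed.
Definition nu m K (x : int) : int := if x == - Hp m K then -3 else if x == hp m K then 0 else 1.
Definition aseq m K b := [seq ap m K b i | i <- iota 1 (3 * m)].
Definition sx m K b (x : int) : seq (bool * nat) :=
  if x == - Hp m K then [::] else if x == hp m K then [:: (true, 0%N)]
  else [:: (true, (index x (aseq m K b)).+1)].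
Definition bsum m K b (s : seq (bool * nat)) : rat :=
  \sum_(p <- s) (if p.1 then betap m K b p.2 else - betap m K b p.2).

Lemma aseq_idx m K b x : x \in aseq m K b ->
  ((index x (aseq m K b)).+1 <= 3 * m)%N /\ ap m K b (index x (aseq m K b)).+1 = x.
Proof.
move=> Hx; have Hi := Hx; rewrite -index_mem in Hi.
split; first by move: Hi; rewrite /aseq size_map size_iota.
have := nth_index 0 Hx.
rewrite {1}/aseq (nth_map 0%N); last by move: Hi; rewrite /aseq size_map.
rewrite nth_iota; first by rewrite add1n.
by move: Hi; rewrite /aseq size_map size_iota.
Qed.

Lemma leaf_id m K b x : Hp m K != 0 -> x \in Xp m K b ->
  [/\ (x%:~R / (Hp m K)%:~R : rat) = (nu m K x)%:~R / 3 + bsum m K b (sx m K b x),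
      all (fun p => (p.2 <= 3 * m)%N) (sx m K b x) &
      size (sx m K b x) = (x != - Hp m K)].
Proof.
move=> H0 Hx.
have Hq : (Hp m K)%:~R != 0 :> rat by rewrite intr_eq0.
rewrite /nu /sx /bsum; case: eqP => [->|/eqP nH].
  split => //; rewrite big_nil addr0 mulNr divff // rmorphN /=.
  by rewrite mulNr divff.
case: eqP => [->|/eqP nh].
  by split => //; rewrite big_seq1 /= /betap /= mul0r add0r.
have Ha : x \in aseq m K b.
  move: Hx; rewrite /Xp !mem_cat !mem_nseq (negbTE nH) (negbTE nh) !andbF !orbF.
  by [].
case: (@aseq_idx m K b x Ha) => Hle Heq.
split; rewrite ?big_seq1 /= ?Hle //.
rewrite /betap /= Heq mul1r addrC subrK.
by [].
Qed.
Lemma list_id m K b (l : seq int) : Hp m K != 0 -> all (mem (Xp m K b)) l ->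
  [/\ \sum_(x <- l) (x%:~R / (Hp m K)%:~R : rat) =
        (\sum_(x <- l) nu m K x)%:~R / 3 + bsum m K b (flatten (map (sx m K b) l)),
      all (fun p => (p.2 <= 3 * m)%N) (flatten (map (sx m K b) l)) &
      size (flatten (map (sx m K b) l)) = count (fun x => x != - Hp m K) l].
Proof.
move=> H0; elim: l => [|x l IH] /=.
  by move=> _; rewrite !big_nil /bsum big_nil mul0r addr0.
case/andP => Hx /IH [E1 E2 E3].
case: (@leaf_id m K b x H0 Hx) => F1 F2 F3.
split.
- rewrite !big_cons E1 F1 rmorphD /= mulrDl /bsum big_cat /= -/(bsum _ _ _ _).
  rewrite -/(bsum m K b (sx m K b x)).
  by rewrite -!addrA; congr (_ + _); rewrite addrCA.
- by rewrite all_cat F2 E2.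
- by rewrite size_cat F3 E3.
Qed.

Lemma lam_sub m K b u : Hp m K != 0 -> all (mem (Xp m K b)) (leaves u) ->
  (count (fun x => x != - Hp m K) (leaves u) <= 5 * m)%N ->
  lambda_form m K b (tval (tmap (nu m K) u)) (tval u).
Proof.
move=> H0 Hall Hc.
case: (@list_id m K b (leaves u) H0 Hall) => E1 E2 E3.
exists (flatten (map (sx m K b) (leaves u))); split => //.
  by rewrite E3.
have Hq : (Hp m K)%:~R != 0 :> rat by rewrite intr_eq0.
rewrite tval_tmap -/(bsum m K b _) -E1 -mulr_suml.
rewrite tval_sum rmorph_sum /=.
by rewrite divfK.
Qed.
Definition grp m K b k := ANode (ANode (ANode (ANode (ALeaf (ap m K b (3*k).+1))
   (ALeaf (ap m K b (3*k).+2))) (ALeaf (- Hp m K))) (ALeaf (ap m K b (3*k).+3))) (ALeaf (hp m K)).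
Fixpoint tstar m K b k := match k with 0 => grp m K b 0
  | k'.+1 => ANode (tstar m K b k') (grp m K b k'.+1) end.
Definition Xgen m K b n := [seq ap m K b i | i <- iota 1 (3*n)] ++ nseq n (- Hp m K) ++ nseq n (hp m K).

Lemma tstar_perm m K b k : perm_eq (leaves (tstar m K b k)) (Xgen m K b k.+1).
Proof.
apply/permP => P; elim: k => [|k IH].
  by rewrite /= /Xgen /= muln0; lia.
have -> : leaves (tstar m K b k.+1) = leaves (tstar m K b k) ++ leaves (grp m K b k.+1) by [].
rewrite count_cat IH /Xgen (mulnSr 3 k.+1) iotaD !map_cat !count_cat !count_nseq.
set j := (3 * k.+1)%N.
have -> : iota (1 + j) 3 = [:: j.+1; j.+2; j.+3] by rewrite add1n.
rewrite /= !mulnS; lia.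
Qed.

Lemma tstar_cost m K b k :
  (forall i, (1 <= i <= 3 * m)%N -> nu m K (ap m K b i) = 1) -> nu m K (hp m K) = 0 ->
  (k < m)%N ->
  cost (tmap (nu m K) (tstar m K b k)) = (3 * k.+1)%N%:Z /\ tval (tmap (nu m K) (tstar m K b k)) = 0.
Proof.
move=> Ha Hh.
have nH : nu m K (- Hp m K) = -3 by rewrite /nu eqxx.
have G : forall k, (k < m)%N -> cost (tmap (nu m K) (grp m K b k)) = 3 /\ tval (tmap (nu m K) (grp m K b k)) = 0.
  move=> j Hj.
  rewrite /grp /= !Ha ?nH ?Hh; try (apply/andP; split; lia).
  by rewrite !cost_node !cost_leaf.
elim: k => [|k IH] Hk; first by apply: G.
case: (IH (ltnW Hk)) => C1 V1; case: (G _ Hk) => C2 V2.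
rewrite /= cost_node -/(tmap _ (tstar m K b k)) C1 C2 V1 V2.
move: V2; rewrite /= => V2; rewrite V2; split => //.
rewrite addr0 normr0 add0r; lia.
Qed.
Lemma sum_const_int (T : Type) (s : seq T) (c : int) : \sum_(x <- s) c = (size s)%:R * c.
Proof.
elim: s => [|y s IH]; first by rewrite big_nil mul0r.
by rewrite big_cons IH /= -addn1 natrD mulrDl mul1r addrC.
Qed.

Theorem lemma2p7 (m K : nat) (b : nat -> int) (T : atree) :
  (0 < m)%N -> (0 < K)%N ->
  (forall i, (1 <= i <= 3 * m)%N ->
     0 < b i /\ (K%:R / 4 < (b i)%:~R :> rat) /\ ((b i)%:~R < K%:R / 2 :> rat)) ->
  \sum_(1 <= i < (3 * m).+1) b i = (m * K)%N%:Z ->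
  is_min_tree (Xp m K b) T ->
  (forall z, z \in all_vals T -> 0 < z ->
     lambda_form m K b 0 z \/ lambda_form m K b 1 z \/ lambda_form m K b 2 z) /\
  (forall z, z \in internal_vals T -> z < 0 ->
     lambda_form m K b 0 z \/ lambda_form m K b (-1) z \/ lambda_form m K b (-2) z).
Proof.
move=> m0 K0 Hb _ [HT Hmin].
case: (@h_bounds m K m0) => h0 h4.
have HWd : Wp m K = 2500 * (m * m * K)%N%:Z.
  by rewrite /Wp; lia.
have HHd : Hp m K = 3 * Wp m K + K%:Z + hp m K by [].
have X1 : (1 <= m * m * K)%N by rewrite !muln_gt0 m0 K0.
have XK : (K <= m * m * K)%N by rewrite leq_pmull // muln_gt0 m0.
have XmK : (m * K <= m * m * K)%N by rewrite -mulnA leq_pmull.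
have Hbig : 7500 * (m * m * K)%N%:Z <= Hp m K by rewrite HHd HWd; lia.
have Hpos : 0 < Hp m K by lia.
have HbZ : forall i, (1 <= i <= 3 * m)%N -> 0 < b i /\ 2 * b i < K%:Z.
  move=> i Hi; case: (Hb i Hi) => b0 [_ bK]; split => //.
  have E : ((b i * 2)%:~R : rat) = (b i)%:~R * 2 by rewrite rmorphM.
  have : ((b i * 2)%:~R : rat) < (K%:Z)%:~R by rewrite E -pmulrn -ltr_pdivlMr.
  rewrite ltr_int; lia.
have nuA : forall i, (1 <= i <= 3 * m)%N -> nu m K (ap m K b i) = 1.
  move=> i Hi; case: (HbZ i Hi) => b0 b1; rewrite /nu /ap.
  have -> : (b i + Wp m K == - Hp m K) = false by apply/eqP; lia.
  have -> : (b i + Wp m K == hp m K) = false.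
    apply/eqP; lia.
  by [].
have nuh : nu m K (hp m K) = 0.
  rewrite /nu; have -> : (hp m K == - Hp m K) = false.
    apply/eqP; lia.
  by rewrite eqxx.
have nuH : nu m K (- Hp m K) = -3 by rewrite /nu eqxx.
have XpS : size (Xp m K b) = (5 * m)%N.
  by rewrite /Xp !size_cat size_map size_iota !size_nseq; lia.
pose e := fun x : int => `|3 * x - nu m K x * Hp m K|.
have e0 : forall x, 0 <= e x by move=> x; exact: normr_ge0.
have HB : \sum_(x <- Xp m K b) e x <= 36 * (m * K)%N%:Z.
  rewrite /Xp !big_cat /=.
  have S1 : \sum_(x <- [seq ap m K b i | i <- iota 1 (3 * m)]) e x <= 24 * (m * K)%N%:Z.
    apply: le_trans (@sum_le_const _ _ _ (8 * K%:Z) _) _.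
      move=> x /mapP [i]; rewrite mem_iota => Hi ->.
      have Hi' : (1 <= i <= 3 * m)%N by lia.
      rewrite /e nuA // mul1r HHd /ap; case: (HbZ i Hi') => ? ?; lia.
    rewrite size_map size_iota natz; lia.
  have S2 : \sum_(x <- nseq m (- Hp m K)) e x <= 0.
    apply: le_trans (@sum_le_const _ _ _ 0 _) _; last by rewrite mulr0.
    move=> x; rewrite mem_nseq => /andP[_ /eqP ->].
    by rewrite /e nuH mulNr opprK mulrN addrC subrr normr0.
  have S3 : \sum_(x <- nseq m (hp m K)) e x <= 12 * (m * K)%N%:Z.
    apply: le_trans (@sum_le_const _ _ _ (12 * K%:Z) _) _.
      move=> x; rewrite mem_nseq => /andP[_ /eqP ->].
      rewrite /e nuh mul0r subr0; lia.
    rewrite size_nseq natz; lia.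
  apply: le_trans (lerD S1 (lerD S2 S3)) _; lia.
set B := \sum_(x <- Xp m K b) e x in HB.
have B0 : 0 <= B by apply: sumr_ge0 => x _.
pose Ts := tstar m K b m.-1.
have permS : perm_eq (leaves Ts) (Xp m K b).
  by have := tstar_perm m K b m.-1; rewrite prednK.
have mlt : (m.-1 < m)%N by rewrite prednK.
have [CS VS] := @tstar_cost m K b m.-1 nuA nuh mlt.
rewrite (prednK m0) in CS.
have sumT : \sum_(x <- leaves T) e x = B by apply: perm_big.
have sumS : \sum_(x <- leaves Ts) e x = B by apply: perm_big.
have nT : (size (internal_vals T)).+1 = (5 * m)%N by rewrite size_internal (perm_size HT).
have nS : (size (internal_vals Ts)).+1 = (5 * m)%N by rewrite size_internal (perm_size permS).
have sT' : \sum_(x <- leaves T) `|3 * x - nu m K x * Hp m K| <= B.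
  by move: sumT; rewrite /e => ->.
have sS' : \sum_(x <- leaves Ts) `|3 * x - nu m K x * Hp m K| <= B.
  by move: sumS; rewrite /e => ->.
have AT := @approxB (nu m K) (Hp m K) B T (ltW Hpos) sT'.
have AS := @approxB (nu m K) (Hp m K) B Ts (ltW Hpos) sS'.
have LA := @lowerA (tmap (nu m K) T).
have cnt1 : count (eq_op^~ 1) (leaves (tmap (nu m K) T)) = (3 * m)%N.
  rewrite leaves_tmap count_map (permP HT) /Xp !count_cat !count_nseq /= nuH nuh /=.
  rewrite count_map (@eq_in_count _ _ predT); first by rewrite count_predT size_iota; lia.
  move=> i; rewrite mem_iota => Hi /=; rewrite nuA //; lia.
have tv0 : tval (tmap (nu m K) T) = 0.
  rewrite tval_tmap (perm_big _ HT) /Xp !big_cat /= big_map.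
  rewrite (@eq_big_seq _ _ _ _ _ _ (fun _ => 1)); last first.
    move=> i; rewrite mem_iota => Hi; rewrite nuA //; lia.
  rewrite !sum_const_int.
  have -> : \sum_(x <- nseq m (- Hp m K)) nu m K x = \sum_(x <- nseq m (- Hp m K)) (-3).
    by apply: eq_big_seq => x; rewrite mem_nseq => /andP[_ /eqP ->].
  have -> : \sum_(x <- nseq m (hp m K)) nu m K x = \sum_(x <- nseq m (hp m K)) 0.
    by apply: eq_big_seq => x; rewrite mem_nseq => /andP[_ /eqP ->].
  rewrite !sum_const_int size_iota !size_nseq !natz; lia.
have allv : all (fun x : int => (x == 1) || (x == -3) || (x == 0)) (leaves (tmap (nu m K) T)).
  rewrite leaves_tmap all_map; apply/allP => x _ /=; rewrite /nu.
  by case: ifP => _; [|case: ifP => _].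
have L1 := LA allv.
have ps0 : psi 0 = 0 by [].
rewrite cnt1 tv0 ps0 in L1.
set C := cost (tmap (nu m K) T) in L1 AT.
set nb := nbad (tmap (nu m K) T) in L1.
have HminS := Hmin Ts permS.
rewrite CS in AS.
have n5 : forall t, (size (internal_vals t)).+1 = (5 * m)%N ->
    (size (internal_vals t))%:R * B <= 180 * (m * m * K)%N%:Z.
  move=> t Ht.
  apply: le_trans (ler_wpM2r B0 (_ : _ <= (5 * m)%N%:R)) _.
    by rewrite ler_nat; lia.
  apply: le_trans (ler_wpM2l (ler0n _ _) HB) _.
  rewrite natz; lia.
have nbT := n5 _ nT.
have nbS := n5 _ nS.
move: AT AS; rewrite !ler_norml => /andP[AT1 AT2] /andP[AS1 AS2].
have HC : Hp m K * ((3 * m)%N%:R + nb%:R) <= Hp m K * C.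
  apply: ler_wpM2l; [exact: ltW | lia].
have Hnb : Hp m K * nb%:R <= 360 * (m * m * K)%N%:Z.
  clear -AT1 AS2 HminS HC nbT nbS; rewrite mulrDr in HC; lia.
have nb0 : nb = 0%N.
  case: (posnP nb) => // Hn.
  have : Hp m K * 1 <= Hp m K * nb%:R by apply: ler_wpM2l; [exact: ltW | rewrite ler1n].
  rewrite mulr1 => H1.
  clear -Hnb H1 Hbig X1; lia.
have NB : forall u, sub u T -> isnode u -> `|tval (tmap (nu m K) u)| < 3.
  move=> u Hu Hn.
  have Hin := @sub_internal (nu m K) u T Hu Hn.
  have : ~~ has (fun v : int => 3 <= `|v|) (internal_vals (tmap (nu m K) T)).
    by rewrite has_count -/(nbad _) -/nb nb0.
  move/hasPn => /(_ _ Hin) /=; rewrite -ltNge; by [].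
have KEY : forall u, sub u T ->
   lambda_form m K b (tval (tmap (nu m K) u)) (tval u) /\
   `|3 * tval u - tval (tmap (nu m K) u) * Hp m K| <= B.
  move=> u Hu; split.
    apply: lam_sub; first by rewrite lt0r_neq0.
      by apply/allP => x /(@sub_leaves u T Hu); rewrite (perm_mem HT).
    apply: leq_trans (@sub_count _ u T Hu) _.
    by rewrite (permP HT) -XpS count_size.
  rewrite tval_tmap tval_sum mulr_sumr mulr_suml -sumrB.
  apply: le_trans (ler_norm_sum _ _ _) _.
  apply: le_trans _ sT'.
  apply: (@sub_sumle (fun x => `|3 * x - nu m K x * Hp m K|) u T) => //.
have Nle : forall u, sub u T -> tval (tmap (nu m K) u) <= 2.
  move=> u Hu; case: u Hu => [x|l r] Hu.
    by rewrite /= /nu; case: ifP => _; [|case: ifP => _].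
  have := NB _ Hu isT; lia.
split.
  move=> z /all_vals_sub [u Hu <-] zpos.
  case: (KEY u Hu) => LF EB.
  have N2 := Nle u Hu.
  move: LF EB N2; set N := tval (tmap (nu m K) u) => LF EB N2.
  have N0 : 0 <= N.
    case: (lerP 0 N) => // Nn.
    have NH : N * Hp m K <= -1 * Hp m K by apply: ler_wpM2r; [exact: ltW | lia].
    rewrite mulN1r in NH.
    clear -EB HB zpos NH Hbig XmK; lia.
  have : N = 0 \/ N = 1 \/ N = 2 by lia.
  by case => [E|[E|E]]; rewrite E in LF; [left|right; left|right; right].
move=> z /internal_vals_sub [u [Hu Hn <-]] zneg.
case: (KEY u Hu) => LF EB.
have N2 := NB u Hu Hn.
move: LF EB N2; set N := tval (tmap (nu m K) u) => LF EB N2.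
have N0 : N <= 0.
  case: (lerP N 0) => // Nn.
  have NH : 1 * Hp m K <= N * Hp m K by apply: ler_wpM2r; [exact: ltW | lia].
  rewrite mul1r in NH.
  clear -EB HB zneg NH Hbig XmK; lia.
have : N = 0 \/ N = -1 \/ N = -2 by lia.
by case => [E|[E|E]]; rewrite E in LF; [left|right; left|right; right].
Qed.
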